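(* Let $M=(M_{ij})_{1\le i,j\le d}$ be a $d\times d$ real matrix with nonnegative coefficients, acting on row vectors by $x\mapsto xM$, and let $C=[0,\infty)^d\setminus\{0\}$. Then: (i) $M(C)\subset C$ if and only if each row of $M$ has a nonzero coefficient; (ii) if $M(C)\subset C$, then $c(M)<1$ if and only if for every pair $(i,j)$ with $M_{ij}=0$, the whole $j$-th column of $M$ is zero.
   Context: Coordinatewise order on $\mathbb{R}^d$. For $x,y\in C$: $\aleph(x,y)=\sup\{b\ge0\mid bx\le y\}$, $m(x,y)=\aleph(x,y)\aleph(y,x)$. On the set $\Pi(C)$ of open half-lines $\{bx:b>0\}$, $x\in C$, define $d(\bar x,\bar y)=\frac{1-m(x,y)}{1+m(x,y)}$ for representatives $x,y$. When $M(C)\subset C$, $M$ acts on $\Pi(C)$ by $M\cdot\Pi(x)=\Pi(xM)$, and $c(M)=\sup\{d(M\cdot\bar x,M\cdot\bar y)\mid\bar x,\bar y\in\Pi(C)\}$. *)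

(* Defs.v *)
From HB Require Import structures.
From mathcomp Require Import all_boot all_order all_algebra.
From mathcomp Require Import all_classical all_reals.
Set Implicit Arguments. Unset Strict Implicit. Unset Printing Implicit Defensive.
Import Order.TTheory GRing.Theory Num.Theory.
Local Open Scope classical_set_scope.
Local Open Scope ring_scope.

Definition inC (R : realType) (d : nat) (x : 'rV[R]_d) : Prop :=
  (forall i, 0 <= x 0 i) /\ x <> 0.

Definition aleph (R : realType) (d : nat) (x y : 'rV[R]_d) : R :=
  sup [set b : R | 0 <= b /\ forall i, b * x 0 i <= y 0 i].

Definition mm (R : realType) (d : nat) (x y : 'rV[R]_d) : R :=
  aleph x y * aleph y x.

(* the distance on half-lines, computed on representatives *)
Definition dist (R : realType) (d : nat) (x y : 'rV[R]_d) : R :=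
  (1 - mm x y) / (1 + mm x y).

Definition preservesC (R : realType) (d : nat) (M : 'M[R]_d) : Prop :=
  forall x : 'rV[R]_d, inC x -> inC (x *m M).

(* c(M) = sup { d(M.x̄, M.ȳ) } ; half-lines are represented by points of C,
   and M . Pi(x) = Pi(xM). *)
Definition contraction (R : realType) (d : nat) (M : 'M[R]_d) : R :=
  sup [set t : R | exists x y : 'rV[R]_d,
         inC x /\ inC y /\ t = dist (x *m M) (y *m M)].

(* Main.v *)
Require Import Defs.
From HB Require Import structures.
From mathcomp Require Import all_boot all_order all_algebra.
From mathcomp Require Import all_classical all_reals.
From mathcomp Require Import ring lra.
Import Order.TTheory GRing.Theory Num.Theory.
Local Open Scope ring_scope.
Local Open Scope classical_set_scope.

Section S.
Variables (R : realType) (d : nat).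
Implicit Types u v x y : 'rV[R]_d.

Lemma inC_pos u : inC u -> exists j, 0 < u 0 j.
Proof.
case=> u0 un0; apply/not_existsP => H; apply: un0.
apply/matrixP => i j; rewrite ord1 !mxE; apply/eqP; rewrite eq_le u0 andbT.
by rewrite leNgt; apply/negP => /H.
Qed.

Lemma aleph_ub u v : inC u -> has_ubound [set b : R | 0 <= b /\ forall i, b * u 0 i <= v 0 i].
Proof.
move=> /inC_pos [j uj]; exists (v 0 j / u 0 j) => b [_ /(_ j) H].
by rewrite ler_pdivlMr.
Qed.

Lemma aleph_ge u v b0 : inC u -> 0 <= b0 -> (forall i, b0 * u 0 i <= v 0 i) ->
  b0 <= aleph u v.
Proof. move=> Cu hb0 H; have := ub_le_sup (aleph_ub u v Cu); rewrite /aleph; apply; by split. Qed.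

Lemma aleph_ge0 u v : inC u -> inC v -> 0 <= aleph u v.
Proof. by move=> Cu [Cv _]; apply: aleph_ge => // i; rewrite mul0r. Qed.

Lemma dist_le1 u v : inC u -> inC v -> dist u v <= 1.
Proof.
move=> Cu Cv; rewrite /dist /mm.
have m0 : 0 <= aleph u v * aleph v u by rewrite mulr_ge0 // aleph_ge0.
rewrite ler_pdivrMr; last by rewrite ltr_wpDr.
by rewrite mul1r lerD2l (le_trans _ m0) // oppr_le0.
Qed.

Lemma dist_le_r u v r : inC u -> inC v -> 0 <= r -> r <= mm u v ->
  dist u v <= (1 - r) / (1 + r).
Proof.
move=> Cu Cv r0 rm; rewrite /dist.
have m0 : 0 <= mm u v by rewrite /mm mulr_ge0 // aleph_ge0.
rewrite ler_pdivrMr; last by rewrite ltr_wpDr.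
rewrite mulrAC ler_pdivlMr; last by rewrite ltr_wpDr.
rewrite -subr_ge0; set m := mm u v.
have -> : (1 - r) * (1 + m) - (1 - m) * (1 + r) = 2 * (m - r) by ring.
by rewrite mulr_ge0 // subr_ge0.
Qed.

Lemma sum_ge_term (I : finType) (F : I -> R) i :
  (forall k, 0 <= F k) -> F i <= \sum_k F k.
Proof. by move=> F0; rewrite (bigD1 i) //= lerDl sumr_ge0. Qed.

Lemma delta_inC i : inC (delta_mx 0 i : 'rV[R]_d).
Proof.
split=> [k|/matrixP /(_ 0 i)]; rewrite !mxE ?ler0n //.
by rewrite !eqxx /= => /eqP; rewrite oner_eq0.
Qed.

Lemma part1 (M : 'M[R]_d) : (forall i j, 0 <= M i j) ->
  preservesC M <-> (forall i, exists j, M i j != 0).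
Proof.
move=> M0; split.
  move=> P i; have := P _ (delta_inC i); rewrite -rowE => /inC_pos [j hj].
  by exists j; rewrite mxE in hj; rewrite gt_eqF.
move=> H x [x0 xn0]; split.
  by move=> j; rewrite mxE sumr_ge0 // => k _; rewrite mulr_ge0.
have [i xi] := inC_pos x (conj x0 xn0); have [j Mij] := H i.
move/matrixP/(_ 0 j); rewrite !mxE => /eqP; apply/negP; rewrite gt_eqF //.
have := sum_ge_term _ (fun k => x 0 k * M k j) i (fun k => mulr_ge0 (x0 k) (M0 k j)).
apply: lt_le_trans; by rewrite mulr_gt0 // lt0r Mij M0.
Qed.


Lemma part2b (M : 'M[R]_d) : (forall i j, 0 <= M i j) -> preservesC M ->
  contraction M < 1 -> forall i j, M i j = 0 -> forall k, M k j = 0.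
Proof.
move=> M0 P cl i j Mij k; case: (eqVneq (M k j) 0) => // Mkj; exfalso.
have Mkj0 : 0 < M k j by rewrite lt0r Mkj M0.
have Cr : forall l, inC (row l M) by move=> l; rewrite rowE; apply: P; apply: delta_inC.
have a0 : aleph (row k M) (row i M) = 0.
  apply/eqP; rewrite eq_le aleph_ge0 ?Cr // andbT; apply: ge_sup.
    by exists 0; split => // l; rewrite mul0r mxE M0.
  move=> b [_ /(_ j)]; rewrite !mxE Mij => h; by rewrite -(pmulr_lle0 b Mkj0).
have d1 : dist (row i M) (row k M) = 1.
  by rewrite /dist /mm a0 mulr0 subr0 addr0 divr1.
have : 1 <= contraction M.
  have Hub : has_ubound [set t : R | exists x y : 'rV[R]_d,
         inC x /\ inC y /\ t = dist (x *m M) (y *m M)].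
    by exists 1 => t [x [y [Cx [Cy ->]]]]; exact: dist_le1 (P _ Cx) (P _ Cy).
  have := ub_le_sup Hub; rewrite /contraction; apply.
  exists (delta_mx 0 i), (delta_mx 0 k); split; [|split]; try exact: delta_inC.
  by rewrite -!rowE d1.
by rewrite leNgt cl.
Qed.


Lemma part2a (M : 'M[R]_d) : (forall i j, 0 <= M i j) -> preservesC M ->
  (forall i j, M i j = 0 -> forall k, M k j = 0) -> contraction M < 1.
Proof.
move=> M0 P Hc.
set mx := 1 + \sum_i \sum_j M i j.
set s := 1 + \sum_i \sum_j (if M i j == 0 then 0 else (M i j)^-1).
have sum0 : 0 <= \sum_i \sum_j M i j by do 2 (apply: sumr_ge0 => ? _).
have sum1 : 0 <= \sum_i \sum_j (if M i j == 0 then 0 else (M i j)^-1).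
  do 2 (apply: sumr_ge0 => ? _); by case: eqP => // _; rewrite invr_ge0.
have mx0 : 0 < mx by rewrite /mx; lra.
have s0 : 0 < s by rewrite /s; lra.
have Mmx : forall i j, M i j <= mx.
  move=> i j; apply: (le_trans (sum_ge_term _ (fun j => M i j) j (M0 i))).
  apply: (le_trans (sum_ge_term _ (fun i => \sum_j M i j) i _)).
    by move=> l; apply: sumr_ge0.
  rewrite /mx; lra.
set mn := s^-1.
have mn0 : 0 < mn by rewrite invr_gt0.
have Mmn : forall i j, M i j != 0 -> mn <= M i j.
  move=> i j nz; have Mp : 0 < M i j by rewrite lt0r nz M0.
  rewrite /mn invf_ple ?posrE //.
  have t0 : forall i j, 0 <= (if M i j == 0 then 0 else (M i j)^-1).
    by move=> ? ?; case: eqP => // _; rewrite invr_ge0.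
  have e : (M i j)^-1 = (if M i j == 0 then 0 else (M i j)^-1) by rewrite (negbTE nz).
  rewrite e; apply: le_trans (sum_ge_term _ (fun j => (if M i j == 0 then 0 else (M i j)^-1)) j (t0 i)) _.
  apply: le_trans (sum_ge_term _ (fun i => \sum_j (if M i j == 0 then 0 else (M i j)^-1)) i _) _.
    by move=> l; apply: sumr_ge0.
  rewrite /s; lra.
have spos : forall x : 'rV[R]_d, inC x -> 0 < \sum_k x 0 k.
  move=> x Cx; have [i xi] := inC_pos x Cx.
  by apply: lt_le_trans xi (sum_ge_term _ (fun k => x 0 k) i _); case: Cx.
have key : forall x y : 'rV[R]_d, inC x -> inC y ->
    mn * (\sum_k y 0 k) / (mx * \sum_k x 0 k) <= aleph (x *m M) (y *m M).
  move=> x y Cx Cy; have sx := spos x Cx; have sy := spos y Cy.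
  apply: aleph_ge; first exact: P.
    by rewrite divr_ge0 // ?mulr_ge0 // ltW.
  move=> j; case: (pselect (exists k, M k j = 0)) => [[k Mkj]|nz].
    have z : forall z : 'rV[R]_d, (z *m M) 0 j = 0.
      by move=> z; rewrite mxE big1 // => l _; rewrite (Hc k j Mkj l) mulr0.
    by rewrite !z mulr0.
  have nz' : forall k, M k j != 0 by move=> k; apply/eqP => h; apply: nz; exists k.
  have lo : mn * \sum_k y 0 k <= (y *m M) 0 j.
    rewrite mxE mulr_sumr; apply: ler_sum => k _.
    by rewrite mulrC ler_wpM2l ?Mmn //; case: Cy.
  have up : (x *m M) 0 j <= mx * \sum_k x 0 k.
    rewrite mxE mulr_sumr; apply: ler_sum => k _.
    by rewrite mulrC ler_wpM2r ?Mmx //; case: Cx.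
  apply: le_trans lo.
  have b0 : 0 <= mn * (\sum_k y 0 k) / (mx * \sum_k x 0 k).
    by rewrite divr_ge0 // ?mulr_ge0 // ltW.
  apply: le_trans (ler_wpM2l b0 up) _.
  rewrite mulrVK // unitfE mulf_neq0 // gt_eqF //.
set r := (mn / mx) ^+ 2.
have r0 : 0 < r by rewrite /r exprn_gt0 // divr_gt0.
set q := (1 - r) / (1 + r).
have q1 : q < 1 by rewrite /q ltr_pdivrMr; lra.
have Tub : forall t, [set t : R | exists x y : 'rV[R]_d,
         inC x /\ inC y /\ t = dist (x *m M) (y *m M)] t -> t <= q.
  move=> t [x [y [Cx [Cy ->]]]]; apply: dist_le_r; try exact: P; first exact: ltW.
  have sx := spos x Cx; have sy := spos y Cy.
  rewrite /mm; apply: le_trans (ler_pM _ _ (key x y Cx Cy) (key y x Cy Cx)).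
  - rewrite /r le_eqVlt; apply/orP; left; apply/eqP; field.
    by rewrite !gt_eqF.
  - by rewrite divr_ge0 // ?mulr_ge0 // ltW.
  - by rewrite divr_ge0 // ?mulr_ge0 // ltW.
rewrite /contraction.
case: (pselect ([set t : R | exists x y : 'rV[R]_d,
         inC x /\ inC y /\ t = dist (x *m M) (y *m M)] !=set0)) => [ne|e].
  exact: le_lt_trans (ge_sup ne Tub) q1.
by rewrite sup_out // => -[].
Qed.

End S.

Theorem mainTheorem8 (R : realType) (d : nat) (M : 'M[R]_d) :
  (forall i j, 0 <= M i j) ->
  (preservesC M <-> (forall i, exists j, M i j != 0)) /\
  (preservesC M ->
     (contraction M < 1 <->
      (forall i j, M i j = 0 -> forall k, M k j = 0))).
Proof.
move=> M0; split; first exact: part1.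
by move=> P; split; [exact: part2b | exact: part2a].
Qed.
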